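(* Let $R$ be a finite rod set not equivalent to the empty rod set, and let $m=\max R$. The following are equivalent: (1) the sequence $(F(n,R))_{n\ge0}$ is eventually periodic, i.e. there are $p>0$ and $N\ge0$ with $F(n+p,R)=F(n,R)$ for all $n\ge N$; (2) $(F(n,R))_{n\ge0}$ is bounded; (3) there exist $0\le a<a'$ with $F(a+j,R)=F(a'+j,R)$ for $j=0,1,\dots,m-1$; (4) there is $p>0$ with $F(n+p,R)=F(n,R)$ for all $n\ge0$; (5) the polynomial $1-C(x,R)$ divides $1-x^p$ in $\mathbb Z[x]$ for some $p\ge1$; (6) $1-C(x,R)$ equals $\pm$ a product of distinct cyclotomic polynomials; (7) there is $m'\ge1$ such that $G(x,R)=\dfrac{q(x)}{1-x^{m'}}$ with $q(x)=\sum_{k=0}^{m'-1}F(k,R)x^k$.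
   Context: A rod is a triple $(r,c,\varepsilon)$ with $r$ a positive integer (length), $c$ a tag (color), $\varepsilon\in\{\pm1\}$ (sign); antirods have sign $-1$. A rod set is a set of rods with finitely many of each length. $C(n,R)$ = (number of positive rods of length $n$) $-$ (number of antirods of length $n$); $R\equiv S$ means $C(n,R)=C(n,S)$ for all $n>0$; each class has a unique reduced member (no rod and antirod of the same length). $R$ is finite if its reduced equivalent is finite, and $\max R$ is the largest length in it. A train built from $R$ is a finite sequence of rods of $R$ (including the empty train), with length the sum of lengths and sign the product of signs; $F(n,R)$ is the number of positive trains of length $n$ minus the number of negative ones ($F(0,R)=1$). $C(x,R)=\sum_{n>0}C(n,R)x^n$ (a polynomial when $R$ is finite) and $G(x,R)=\sum_{n\ge0}F(n,R)x^n$. *)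

(* Defs.v *)
From mathcomp Require Import all_boot all_algebra.
From mathcomp Require Import cyclotomic.
Set Implicit Arguments. Unset Strict Implicit. Unset Printing Implicit Defensive.
Import GRing.Theory.
Local Open Scope ring_scope.

(* A rod is a triple (length, colour, sign); sign is encoded by a boolean
   [neg] : [false] = +1 (rod), [true] = -1 (antirod).  A rod set over a colour
   type [T] is given length by length: [rods n] lists the pairs (colour, sign)
   of the rods of length [n]; it is duplicate-free (it is a set of triples),
   finite for each length, and empty at length 0 (lengths are positive). *)
Record rodset (T : eqType) := RodSet {
  rods : nat -> seq (T * bool);
  rods_uniq : forall n, uniq (rods n);
  rods0 : rods 0%N = [::] }.

Definition rod (T : eqType) : Type := (nat * T * bool)%type.

Definition Crod (T : eqType) (R : rodset T) (n : nat) : int :=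
  (count (fun cs : T * bool => ~~ cs.2) (rods R n))%:Z
  - (count (fun cs : T * bool => cs.2) (rods R n))%:Z.

(* Enumeration of all trains (finite sequences of rods of R) of total length n.
   [fuel] only guarantees termination; [trains R n] uses fuel n, which suffices
   since every rod has positive length. *)
Fixpoint trains_aux (T : eqType) (R : rodset T) (fuel n : nat) : seq (seq (rod T)) :=
  if n == 0%N then [:: [::]] else
  match fuel with
  | 0%N => [::]
  | f.+1 => flatten [seq [seq ((k, cs.1, cs.2) : rod T) :: t
                           | cs <- rods R k, t <- trains_aux R f (n - k)]
                     | k <- iota 1 n]
  end.

Definition trains (T : eqType) (R : rodset T) (n : nat) := trains_aux R n n.

Definition train_len (T : eqType) (t : seq (rod T)) : nat :=
  \sum_(r <- t) r.1.1.

Definition train_sign (T : eqType) (t : seq (rod T)) : int :=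
  (-1) ^+ count (fun r : rod T => r.2) t.

Definition Frod (T : eqType) (R : rodset T) (n : nat) : int :=
  \sum_(t <- trains R n) train_sign t.

Definition Cpoly (T : eqType) (R : rodset T) (m : nat) : {poly int} :=
  \poly_(i < m.+1) Crod R i.

Definition series := nat -> int.
Definition series_of_poly (p : {poly int}) : series := fun n => p`_n.
Definition mul_series (a b : series) : series :=
  fun n => \sum_(i < n.+1) a i * b (n - i)%N.
Definition Gseries (T : eqType) (R : rodset T) : series := fun n => Frod R n.
(* 1/(1 - x^k) = sum_j x^(jk) as a formal power series (k >= 1) *)
Definition inv_one_sub_Xn (k : nat) : series :=
  fun n => if (k %| n)%N then 1 else 0.

(* Main.v *)
Require Import Defs.
From mathcomp Require Import all_boot all_order all_algebra all_field.
From mathcomp Require Import cyclotomic zify ring lra.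
Import Order.TTheory GRing.Theory Num.Theory.
Local Open Scope ring_scope.

Section Rec.
Variables (T : eqType) (R : rodset T).

Lemma trains_auxS f n : trains_aux R f.+1 n.+1 =
  flatten [seq [seq ((k, cs.1, cs.2) : rod T) :: t
                           | cs <- rods R k, t <- trains_aux R f (n.+1 - k)]
                     | k <- iota 1 n.+1].
Proof. by []. Qed.

Lemma trains_fuel f1 f2 n : (n <= f1)%N -> (n <= f2)%N ->
  trains_aux R f1 n = trains_aux R f2 n.
Proof.
elim: f1 f2 n => [|f1 IH] [|f2] [|n] // h1 h2.
rewrite !trains_auxS.
congr flatten; apply/eq_in_map => k; rewrite mem_iota => /andP[k1 kn].
rewrite (IH f2 (n.+1 - k)%N); [by [] | lia | lia].
Qed.

Lemma sum_sign (s : seq (T * bool)) :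
  \sum_(cs <- s) (-1) ^+ cs.2 = ((count (fun cs : T * bool => ~~ cs.2) s)%:Z
  - (count (fun cs : T * bool => cs.2) s)%:Z :> int).
Proof.
elim: s => [|[c b] s IH]; first by rewrite big_nil.
rewrite big_cons IH /=; case: b => /=; rewrite ?add0n ?add1n ?intS; ring.
Qed.

Lemma Frod_rec n : (0 < n)%N ->
  Frod R n = \sum_(k <- iota 1 n) Crod R k * Frod R (n - k).
Proof.
case: n => // n _; rewrite /Frod /trains trains_auxS big_flatten big_map.
apply: eq_big_seq => k; rewrite mem_iota => /andP[k1 kn].
rewrite big_allpairs_dep /= /Crod -sum_sign big_distrl /=.
apply: eq_bigr => cs _; rewrite big_distrr /=.
rewrite (trains_fuel n (n.+1 - k) (n.+1 - k)); [|lia|lia].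
apply: eq_bigr => t _; rewrite /train_sign /= exprD.

done.
Qed.

Lemma Frod0 : Frod R 0 = 1.
Proof. by rewrite /Frod /trains /= big_cons big_nil /train_sign /= addr0. Qed.

Lemma Crod0 : Crod R 0 = 0.
Proof. by rewrite /Crod rods0. Qed.

Lemma Frod_rec' n : (0 < n)%N ->
  Frod R n = \sum_(j < n.+1) Crod R j * Frod R (n - j).
Proof.
move=> n0; rewrite Frod_rec //.
have -> : iota 1 n = index_iota 1 n.+1 by rewrite /index_iota subn1.
rewrite -(big_mkord xpredT (fun j => Crod R j * Frod R (n - j))).
by rewrite [in RHS]big_ltn // Crod0 mul0r add0r.
Qed.

Variable m : nat.
Hypothesis hm : Crod R m != 0.
Hypothesis hmax : forall n : nat, (m < n)%N -> Crod R n = 0.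

Lemma m_gt0 : (0 < m)%N.
Proof. by case: m hm => //; rewrite Crod0 eqxx. Qed.

Lemma coefP j : (1 - Cpoly R m)`_j = (j == 0%N)%:R - Crod R j.
Proof.
rewrite coefB coef1 /Cpoly coef_poly; case: ifP => // /negbT.
by rewrite -leqNgt => /hmax ->; rewrite subr0.
Qed.

Lemma keyrec n : \sum_(j < n.+1) (1 - Cpoly R m)`_j * Frod R (n - j) = (n == 0%N)%:R.
Proof.
under eq_bigr do rewrite coefP mulrBl.
rewrite sumrB big_ord_recl /= subn0 mul1r.
under eq_bigr do rewrite mul0r.
rewrite big1 // addr0.
case: n => [|n]; first by rewrite big_ord_recl big_ord0 Crod0 Frod0 /=; ring.
by rewrite -Frod_rec' // subrr.
Qed.

Definition GN N : {poly int} := \poly_(i < N) Frod R i.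
Local Notation P := (1 - Cpoly R m).

Lemma trunc_key N n : (n < N)%N -> (P * GN N)`_n = (n == 0%N)%:R.
Proof.
move=> nN; rewrite coefM -(keyrec n); apply: eq_bigr => j _.
by rewrite coef_poly (leq_ltn_trans (leq_subr _ _) nN).
Qed.

Lemma coef_congr (a b c : {poly int}) N n :
  (forall i, (i < N)%N -> a`_i = b`_i) -> (n < N)%N -> (a * c)`_n = (b * c)`_n.
Proof.
move=> h nN; rewrite !coefM; apply: eq_bigr => j _; rewrite h //.
exact: leq_ltn_trans (ltnSE (ltn_ord j)) nN.
Qed.

Lemma coef_unitish (r s : {poly int}) n :
  (forall i, (i <= n)%N -> r`_i = (i == 0%N)%:R) -> (r * s)`_n = s`_n.
Proof.
move=> h; rewrite mulrC coefM big_ord_recr /= subnn h // eqxx mulr1.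
rewrite big1 ?add0r // => j _; rewrite h ?leq_subr // subn_eq0 leqNgt ltn_ord /=.
by rewrite mulr0.
Qed.

Lemma P_eq : P = \poly_(i < m.+1) ((i == 0%N)%:R - Crod R i).
Proof.
apply/polyP => i; rewrite coefP coef_poly; case: ifP => // /negbT.
rewrite -leqNgt => hi; rewrite hmax //.
by case: i hi => // ; rewrite ltn0.
Qed.

Lemma size_P : size P = m.+1.
Proof.
rewrite P_eq size_poly_eq //= (negbTE (lt0n_neq0 m_gt0)) sub0r oppr_eq0.
exact: hm.
Qed.

Lemma P_neq0 : P != 0.
Proof. by rewrite -size_poly_eq0 size_P. Qed.

Lemma five_four p : (1 <= p)%N -> (exists q : {poly int}, 1 - 'X^p = q * P) ->
  forall n, Frod R (n + p) = Frod R n.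
Proof.
move=> p1 [q hq] n.
have sz : (size q <= p)%N.
  have q0 : q != 0.
    apply: contraTneq isT => q0; move: hq; rewrite q0 mul0r => /eqP.
    rewrite subr_eq0 => /eqP /(congr1 (fun r : {poly int} => size r)).
    by rewrite size_polyXn size_poly1 => -[] p0; move: p1; rewrite -p0.
  have := congr1 (fun r : {poly int} => size r) hq.
  rewrite /= size_mul // ?P_neq0 // size_P -opprB size_polyN size_XnsubC //.
  rewrite addnS /= => e; rewrite -ltnS e -{1}(addn1 (size q)) leq_add2l; exact: m_gt0.
have e : ((1 - 'X^p) * GN (n + p).+1)`_(n + p) = q`_(n + p).
  rewrite hq -mulrA mulrC coef_unitish // => i hi.
  by rewrite trunc_key // ltnS.
move: e; rewrite mulrBl mul1r coefB coefXnM ltnNge leq_addl /= addnK.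
rewrite !coef_poly ltnS leqnn ltnS leq_addr nth_default ?(leq_trans sz) ?leq_addl //.
by move/eqP; rewrite subr_eq0 => /eqP.
Qed.

Lemma four_five p : (1 <= p)%N -> (forall n, Frod R (n + p) = Frod R n) ->
  1 - 'X^p = (\poly_(k < p) Frod R k) * P.
Proof.
move=> p1 per; apply/polyP => n.
rewrite (@coef_congr _ ((1 - 'X^p) * GN n.+1) _ n.+1) //; last first.
  move=> i hi; rewrite mulrBl mul1r coefB coefXnM !coef_poly.
  case: ifP => ip; first by rewrite hi subr0.
  rewrite hi (leq_ltn_trans (leq_subr _ _) hi).
  have pi : (p <= i)%N by rewrite leqNgt ip.
  by rewrite -{1}(subnK pi) per subrr.
by rewrite -mulrA (mulrC (GN _)) (mulrC (1 - _)) coef_unitish // => i hi; rewrite trunc_key.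
Qed.

Lemma Wrec a : Frod R (a + m) = \sum_(i < m) Crod R i.+1 * Frod R (a + (m - i.+1)).
Proof.
rewrite Frod_rec'; last by rewrite addn_gt0 m_gt0 orbT.
transitivity (\sum_(j < m.+1) Crod R j * Frod R (a + m - j)).
  rewrite [RHS](big_ord_widen (a + m).+1 (fun j => Crod R j * Frod R (a + m - j))); last by rewrite ltnS leq_addl.
  rewrite [RHS]big_mkcond; apply: eq_bigr => j _; case: ifP => // /negbT.
  by rewrite -leqNgt => hj; rewrite hmax // mul0r.
rewrite big_ord_recl Crod0 mul0r add0r; apply: eq_bigr => i _.
by rewrite lift0 addnBA.
Qed.

Definition agree a b := forall j, (j < m)%N -> Frod R (a + j) = Frod R (b + j).

Lemma agree_fwd a b : agree a b -> agree a.+1 b.+1.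
Proof.
move=> h j jm; case: (ltnP j.+1 m) => hj.
  by rewrite !addSnnS h.
have ej : j.+1 = m by apply/eqP; rewrite eqn_leq jm hj.
rewrite !addSnnS ej !Wrec; apply: eq_bigr => i _; rewrite h //.
by rewrite ltn_subrL m_gt0.
Qed.

Lemma agree_all a b : agree a b -> forall j, Frod R (a + j) = Frod R (b + j).
Proof.
move=> h j; have : agree (a + j) (b + j).
  elim: j => [|j IH]; first by rewrite !addn0.
  by rewrite !addnS; apply: agree_fwd.
by move/(_ 0%N m_gt0); rewrite !addn0.
Qed.

Lemma agree_bwd a b : agree a.+1 b.+1 -> agree a b.
Proof.
move=> h [|j] jm; last by rewrite -!addSnnS h // ltnW.
rewrite !addn0.
have em : m = m.-1.+1 by rewrite prednK // m_gt0.
have e : Frod R (a + m) = Frod R (b + m).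
  rewrite em -!addSnnS h //; have := m_gt0; lia.
have hm' := hm.
move: e; rewrite !Wrec em in hm' *; set k := m.-1 in hm' h *.
rewrite !big_ord_recr /= subnn !addn0.
have -> : \sum_(i < k) Crod R i.+1 * Frod R (a + (k.+1 - i.+1)) =
          \sum_(i < k) Crod R i.+1 * Frod R (b + (k.+1 - i.+1)).
  apply: eq_bigr => i _; rewrite subSS.
  have hi : (0 < k - i)%N by rewrite subn_gt0.
  rewrite -(prednK hi) !addnS -!addSn h //.
  move: (ltn_ord i) hi; rewrite /k; lia.
by move/addrI/(mulfI hm').
Qed.

Lemma agree_down k c d : agree (k + c) (k + d) -> agree c d.
Proof.
elim: k => [|k IH]; first by rewrite !add0n.
by rewrite !addSn => /agree_bwd.
Qed.

Lemma three_four : (exists a a' : nat, (a < a')%N /\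
     forall j : nat, (j < m)%N -> Frod R (a + j) = Frod R (a' + j)) ->
  exists p : nat, (0 < p)%N /\ forall n : nat, Frod R (n + p) = Frod R n.
Proof.
move=> [a [a' [lt h]]].
have : agree (a + 0) (a + (a' - a)) by rewrite addn0 subnKC ?(ltnW lt).
move/agree_down/agree_all => h2.
exists (a' - a)%N; split; first by rewrite subn_gt0.
by move=> n; rewrite addnC -h2 add0n.
Qed.
End Rec.

Lemma per_mod (f : nat -> int) p : (0 < p)%N -> (forall n, f (n + p)%N = f n) ->
  forall n, f n = f (n %% p)%N.
Proof.
move=> p0 per n; rewrite {1}(divn_eq n p); elim: (n %/ p)%N => [|k IH].
  by rewrite mul0n add0n.
by rewrite mulSn -addnA addnC per.
Qed.

Lemma series_mod (f : nat -> int) p n : (0 < p)%N ->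
  mul_series (series_of_poly (\poly_(k < p) f k)) (inv_one_sub_Xn p) n = f (n %% p)%N.
Proof.
move=> p0; rewrite /mul_series /series_of_poly /inv_one_sub_Xn.
have hi : (n %% p < n.+1)%N by rewrite ltnS leq_mod.
rewrite (bigD1 (Ordinal hi)) //= coef_poly ltn_pmod //.
have -> : (p %| n - n %% p)%N.
  by rewrite {1}(divn_eq n p) addnK dvdn_mull.
rewrite mulr1 big1 ?addr0 // => -[i hi'] /= ni.
rewrite coef_poly; case: ifP => ip; last by rewrite mul0r.
case: ifP => d; last by rewrite mulr0.
exfalso; move/negP: ni; apply; apply/eqP/val_inj => /=.
case/dvdnP: d => k hk.
have e : n = (k * p + i)%N by rewrite -hk subnK // -ltnS.
by rewrite e modnMDl modn_small.
Qed.

Lemma one_two (f : nat -> int) : (exists p N : nat, (0 < p)%N /\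
  forall n : nat, (N <= n)%N -> f (n + p)%N = f n) ->
  exists B : int, forall n : nat, `|f n| <= B.
Proof.
move=> [p [N [p0 per]]]; exists (\sum_(i < N + p) `|f i|).
elim/ltn_ind => n IH.
case: (ltnP n (N + p)) => hn.
  rewrite (bigD1 (Ordinal hn)) // lerDl.
  by apply: sumr_ge0 => i _; apply: normr_ge0.
have hp : (p <= n)%N by apply: leq_trans hn; rewrite leq_addl.
rewrite -(subnK hp) per; last by rewrite leq_subRL // addnC.
apply: IH; rewrite ltn_subrL p0 /=; apply: leq_trans hn; rewrite addn_gt0 p0.
by rewrite orbT.
Qed.

Lemma two_three (f : nat -> int) (m : nat) : (exists B : int, forall n : nat, `|f n| <= B) ->
  exists a a' : nat, (a < a')%N /\ forall j : nat, (j < m)%N -> f (a + j)%N = f (a' + j)%N.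
Proof.
move=> [B hB].
have B0 : 0 <= B by apply: le_trans (hB 0%N); rewrite normr_ge0.
pose M := (2 * `|B|)%N.
pose enc (x : int) : 'I_M.+1 := inord (absz (x + B)).
have encK x : `|x| <= B -> nat_of_ord (enc x) = absz (x + B).
  move=> hx; rewrite /enc inordK // ltnS /M.
  have : leq (absz (x + B)) (absz B + absz B).
    rewrite -lez_nat PoszD !abszE; apply: le_trans (ler_normD _ _) _.
    by rewrite lerD2r (ger0_norm B0).
  by rewrite mul2n addnn.
have encI x y : `|x| <= B -> `|y| <= B -> enc x = enc y -> x = y.
  move=> hx hy e.
  have := congr1 (fun i : 'I_M.+1 => Posz (nat_of_ord i)) e => /=.
  rewrite !encK // !abszE !ger0_norm; first by move/addIr.
  - by have := ler_norm (- y); rewrite normrN => h; lra.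
  - by have := ler_norm (- x); rewrite normrN => h; lra.
pose K := #|{ffun 'I_m -> 'I_M.+1}|.
pose g (i : 'I_K.+1) := [ffun j : 'I_m => enc (f (i + j)%N)].
have : ~~ injectiveb g.
  apply/negP => /injectiveP /leq_card; rewrite card_ord /K ltnn //.
move/injectivePn => [x [y xy gxy]].
have agree j : (j < m)%N -> f (x + j)%N = f (y + j)%N.
  move=> jm; have := congr1 (fun h : {ffun 'I_m -> 'I_M.+1} => h (Ordinal jm)) gxy; rewrite /g !ffunE.
  by apply: encI.
case: (ltngtP x y) => hxy.
- by exists x, y; split.
- by exists y, x; split => // j jm; rewrite agree.
- by move: xy; rewrite (val_inj hxy) eqxx.
Qed.
Set Implicit Arguments. Unset Strict Implicit.

Notation pZC := (map_poly (intr : int -> algC)).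
Definition phi d : {poly algC} := pZC 'Phi_d.

Lemma phi_prim d z : (0 < d)%N -> root (phi d) z = d.-primitive_root z.
Proof.
move=> d0; case: (C_prim_root_exists d0) => z0 pz0.
by rewrite /phi (Cintr_Cyclotomic pz0) (root_cyclotomic pz0).
Qed.

Lemma prim_uniq d e (z : algC) : d.-primitive_root z -> e.-primitive_root z -> d = e.
Proof.
move=> pd pe; apply/eqP; rewrite eqn_dvd (prim_order_dvd pd) (prim_order_dvd pe).
by rewrite (prim_expr_order pd) (prim_expr_order pe) eqxx.
Qed.

Lemma notcop_root (p q : {poly algC}) : ~~ coprimep p q -> exists z, root p z && root q z.
Proof. by rewrite coprimep_def => /closed_rootP [z]; rewrite root_gcd; exists z. Qed.

Lemma phi_coprime d e : (0 < d)%N -> (0 < e)%N -> d != e -> coprimep (phi d) (phi e).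
Proof.
move=> d0 e0 de; apply: contraNT de => /notcop_root [z /andP[rd re]].
rewrite phi_prim // in rd; rewrite phi_prim // in re; by rewrite (prim_uniq rd re).
Qed.

Lemma phi_monic d : phi d \is monic.
Proof.
rewrite monicE /phi lead_coef_map_inj //; last exact: intr_inj.
by rewrite (monicP (Cyclotomic_monic d)).
Qed.

Lemma min_div d z (P : {poly int}) : d.-primitive_root z -> root (pZC P) z ->
  phi d %| pZC P.
Proof.
move=> pz rz; have [pf [Dpf _] dv] := minCpolyP z.
have e1 : pZC P = map_poly ratr (map_poly (intr : int -> rat) P).
  by rewrite -map_poly_comp; apply: eq_map_poly => x /=; rewrite rmorph_int.
have e2 : phi d = map_poly ratr pf.
  by rewrite -Dpf (minCpoly_cyclotomic pz) /phi (Cintr_Cyclotomic pz).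
by rewrite e1 e2 dvdp_map -dv -e1.
Qed.

Lemma coprime_prod (p : {poly algC}) (s : seq nat) :
  (forall d, d \in s -> coprimep p (phi d)) -> coprimep p (\prod_(d <- s) phi d).
Proof.
elim: s => [|x s IH] h; first by rewrite big_nil coprimep1.
rewrite big_cons coprimepMr h ?mem_head // IH // => d ds.
by apply: h; rewrite in_cons ds orbT.
Qed.

Lemma prod_dvd (s : seq nat) (Q : {poly algC}) : uniq s -> all (fun d => 0 < d)%N s ->
  (forall d, d \in s -> phi d %| Q) -> \prod_(d <- s) phi d %| Q.
Proof.
elim: s => [|x s IH] /=; first by rewrite big_nil dvd1p.
move=> /andP[xs us] /andP[x0 as_] h; rewrite big_cons Gauss_dvdp.
  by rewrite h ?mem_head // IH // => d ds; apply: h; rewrite in_cons ds orbT.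
apply: coprime_prod => d ds; apply: phi_coprime => //; first by move/allP: as_; apply.
by apply: contraNneq xs => ->.
Qed.

Lemma int_unit (x y : int) : x * y = 1 -> x = 1 \/ x = -1.
Proof.
move=> h; have : (absz x * absz y)%N = 1%N by rewrite -abszM h.
move/eqP; rewrite muln_eq1 => /andP[/eqP hx _].
by clear h; case: x hx => [n|n] /= hx; [left; rewrite hx | right; case: n hx => // -[]].
Qed.

Lemma five_six (P q : {poly int}) p : (1 <= p)%N -> 1 - 'X^p = q * P -> P`_0 = 1 ->
  exists (s : seq nat) (b : bool), uniq s /\ all (fun d => 0 < d)%N s /\
     P = (-1) ^+ b * \prod_(d <- s) 'Phi_d.
Proof.
move=> p0 hq P0.
set Pc := pZC P.
pose t := divisors p.
pose a d := ~~ coprimep Pc (phi d).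
pose s := [seq d <- t | a d].
have tpos d : d \in t -> (0 < d)%N by rewrite -dvdn_divisors //; apply: dvdn_gt0.
have us : uniq s by apply: filter_uniq; apply: divisors_uniq.
have as_ : all (fun d => 0 < d)%N s.
  by apply/allP => d; rewrite mem_filter => /andP[_ /tpos].
have hPc : Pc %| 1 - 'X^p.
  have := congr1 pZC hq; rewrite rmorphB rmorph1 /= map_polyXn rmorphM /= => ->.
  by rewrite dvdp_mull.
have hX : 1 - 'X^p = - (\prod_(d <- t) phi d).
  rewrite /phi -rmorph_prod prod_Cyclotomic // rmorphB rmorph1 /= map_polyXn.
  by rewrite opprB.
have hPM : Pc %| \prod_(d <- s) phi d.
  move: hPc; rewrite hX dvdpNr (bigID a) /= -big_filter -/s -big_filter.
  rewrite Gauss_dvdpl // -big_filter; apply: coprime_prod => d.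
  by rewrite mem_filter => /andP[/negbNE].
have hMP : \prod_(d <- s) phi d %| Pc.
  apply: prod_dvd => // d; rewrite mem_filter => /andP[/notcop_root [z /andP[r1 r2]] dt].
  rewrite phi_prim ?tpos // in r2.
  exact: min_div r2 r1.
have : Pc %= \prod_(d <- s) phi d by rewrite /eqp hPM hMP.
move=> /eqpP [[c1 c2] /= /andP[c10 c20] e].
have eP : Pc = (c1^-1 * c2) *: \prod_(d <- s) phi d.
  by rewrite -scalerA -e scalerA mulVf // scale1r.
set c := c1^-1 * c2 in eP.
have mM : \prod_(d <- s) phi d \is monic by apply: monic_prod => d _; apply: phi_monic.
have lc : c = (lead_coef P)%:~R.
  have := congr1 lead_coef eP; rewrite lead_coefZ (monicP mM) mulr1 => <-.
  by rewrite lead_coef_map_inj //; apply: intr_inj.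
have eQ : \prod_(d <- s) phi d = pZC (\prod_(d <- s) 'Phi_d) by rewrite rmorph_prod.
have h1 : lead_coef P * (\prod_(d <- s) 'Phi_d)`_0 = 1.
  have := congr1 (fun r : {poly algC} => r`_0) eP.
  rewrite /= coefZ eQ !coef_map /= P0 lc -rmorphM /=.
  by move/esym => /(intr_inj (R := algC)).
have eP2 : P = (lead_coef P)%:P * \prod_(d <- s) 'Phi_d.
  apply: (map_inj_poly (intr_inj (R := algC))) => //.
  by rewrite rmorphM /= map_polyC /= -eQ -lc mul_polyC -eP.
case: (int_unit h1) => hl; rewrite hl in eP2.
  by exists s, false; rewrite expr0 -polyC1.
by exists s, true; rewrite expr1 polyCN polyC1 in eP2 *.
Qed.

Lemma prodn_pos (s : seq nat) : all (fun d => 0 < d)%N s -> (0 < \prod_(d <- s) d)%N.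
Proof.
elim: s => [|x s IH] /=; first by rewrite big_nil.
by move=> /andP[x0 h]; rewrite big_cons muln_gt0 x0 IH.
Qed.

Lemma prodn_dvd (s : seq nat) d : d \in s -> (d %| \prod_(d <- s) d)%N.
Proof.
elim: s => [|x s IH] //=.
rewrite in_cons big_cons => /orP[/eqP -> | ds]; first exact: dvdn_mulr.
by apply: dvdn_mull; apply: IH.
Qed.

Lemma six_five (P : {poly int}) (s : seq nat) (b : bool) : uniq s ->
  all (fun d => 0 < d)%N s -> P = (-1) ^+ b * \prod_(d <- s) 'Phi_d ->
  exists p : nat, (1 <= p)%N /\ exists q : {poly int}, 1 - 'X^p = q * P.
Proof.
move=> us as_ eP.
pose p := (\prod_(d <- s) d)%N.
have p0 : (0 < p)%N by apply: prodn_pos.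
have dvd d : d \in s -> (d %| p)%N by apply: prodn_dvd.
pose t := divisors p.
pose r := [seq d <- t | d \notin s].
have pe : perm_eq t (s ++ r).
  apply: uniq_perm; first exact: divisors_uniq.
    rewrite cat_uniq us filter_uniq ?divisors_uniq // andbT.
    by apply/hasPn => d; rewrite mem_filter => /andP[].
  move=> d; rewrite mem_cat mem_filter.
  case ds: (d \in s) => //=; by rewrite -dvdn_divisors // dvd.
exists p; split => //.
exists (- ((-1) ^+ b * \prod_(d <- r) 'Phi_d)).
have sg : ((-1) ^+ b * (-1) ^+ b : {poly int}) = 1 by clear eP; case: b; rewrite ?expr0 ?expr1 ?mulr1 ?mulrNN ?mulr1.
rewrite eP -opprB -(prod_Cyclotomic p0) (perm_big _ pe) big_cat /=.
set A := \prod_(d <- s) _; set B := \prod_(d <- r) _.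
transitivity (- ((-1) ^+ b * (-1) ^+ b * (A * B))); last by ring.
by rewrite sg mul1r.
Qed.
Unset Implicit Arguments.

From Stdlib Require Import FunctionalExtensionality.
Theorem mainTheorem14 (T : eqType) (R : rodset T) (m : nat)
  (* R is finite and not equivalent to the empty rod set, with max R = m *)
  (hm : Crod R m != 0) (hmax : forall n : nat, (m < n)%N -> Crod R n = 0) :
  [<->
   (* (1) eventually periodic *)
   exists p N : nat, (0 < p)%N /\ forall n : nat, (N <= n)%N -> Frod R (n + p) = Frod R n;
   (* (2) bounded *)
   exists B : int, forall n : nat, `|Frod R n| <= B;
   (* (3) *)
   exists a a' : nat, (a < a')%N /\
     forall j : nat, (j < m)%N -> Frod R (a + j) = Frod R (a' + j);
   (* (4) purely periodic *)
   exists p : nat, (0 < p)%N /\ forall n : nat, Frod R (n + p) = Frod R n;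
   (* (5) 1 - C(x,R) divides 1 - x^p in Z[x] *)
   exists p : nat, (1 <= p)%N /\
     exists q : {poly int}, 1 - 'X^p = q * (1 - Cpoly R m);
   (* (6) 1 - C(x,R) = +- product of distinct cyclotomic polynomials *)
   exists (s : seq nat) (b : bool), uniq s /\ all (fun d => 0 < d)%N s /\
     1 - Cpoly R m = (-1) ^+ b * \prod_(d <- s) 'Phi_d;
   (* (7) G(x,R) = q(x) / (1 - x^m') with q = sum_{k<m'} F(k,R) x^k *)
   exists m' : nat, (1 <= m')%N /\
     Gseries R = mul_series (series_of_poly (\poly_(k < m') Frod R k))
                            (inv_one_sub_Xn m')].
Proof.
have P0 : (1 - Cpoly R m)`_0 = 1 by rewrite (coefP _ _ _ hmax) Crod0 subr0.
have h74 : forall p, (0 < p)%N -> (forall n, Frod R (n + p) = Frod R n) ->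
    Gseries R = mul_series (series_of_poly (\poly_(k < p) Frod R k)) (inv_one_sub_Xn p).
  move=> p p0 per; apply: functional_extensionality => n.
  by rewrite /Gseries series_mod // -per_mod.
tfae.
- exact: one_two.
- exact: two_three.
- exact: (three_four _ _ _ hm hmax).
- move=> [p [p0 per]]; exists p; split => //.
  by exists (\poly_(k < p) Frod R k); apply: (four_five _ _ _ hmax).
- move=> [p [p1 [q hq]]]; exact: (five_six p1 hq P0).
- move=> [s [b [us [as_ eP]]]].
  have [p [p1 hq]] := six_five us as_ eP.
  have per := five_four _ _ _ hm hmax p p1 hq.
  by exists p; split => //; apply: h74.
- move=> [p [p1 e]]; exists p, 0%N; split => // n _.
  have g := fun k => congr1 (fun f : series => f k) e.
  have := g (n + p)%N; have := g n; rewrite /Gseries /= !series_mod //.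
  by rewrite modnDr => -> ->.
Qed.
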